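(* Let $R$ be the ring of integers of a nonarchimedean local field of characteristic not $2$ in which $2$ is a prime element. (a) For any unit $\epsilon\in R$, $\mathbb{H}\perp\langle\epsilon\rangle$ is isometric to $\langle 1,-1,\epsilon\rangle$. Hence $\mathbb{H}\perp\langle\epsilon\rangle$ primitively represents all binary $R$-lattices of the form $\langle\alpha,\epsilon\rangle$ with $\alpha\in R$; in particular, $\mathbb{H}\perp\langle\epsilon\rangle$ is primitively $1$-universal. (b) If an $R$-lattice $J$ primitively represents an $R$-lattice $K$ of rank $k$ and also primitively represents some unit of $R$, then for every $n\ge1$, $\mathbb{H}^n\perp J$ primitively represents all $R$-lattices of rank $n+k$ of the form $\ell\perp K$, where $\ell$ is any $R$-lattice of rank $n$. In particular, $\mathbb{H}^n\perp J$ is primitively $n$-universal.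
   Context: An $R$-lattice is a finitely generated $R$-submodule of a quadratic space $(V,B)$ over $F$ with $Q(v)=B(v,v)$, assumed integral ($B(L,L)\subseteq R$). $L$ primitively represents $\beta\in R$ if $\beta=Q(v)$ for some $v\in L$ with $Rv$ a direct summand. A representation is an $R$-linear map preserving $B$, primitive if its image is a direct summand; a lattice is primitively $n$-universal if it primitively represents every nondegenerate integral $R$-lattice of rank $n$. $\mathbb{H}$ is the binary lattice with Gram matrix $\begin{pmatrix}0&1\\1&0\end{pmatrix}$, $\mathbb{H}^n$ the orthogonal sum of $n$ copies, and $\langle a_1,\dots,a_k\rangle$ the lattice with Gram matrix $\operatorname{diag}(a_1,\dots,a_k)$. *)

(* Defs.v *)
From HB Require Import structures.
From mathcomp Require Import all_boot all_order all_algebra.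
Set Implicit Arguments. Unset Strict Implicit. Unset Printing Implicit Defensive.
Import Order.TTheory GRing.Theory Num.Theory.
Local Open Scope ring_scope.

(* v is only meaningful on nonzero elements.                           *)

Definition is_dvaluation (F : fieldType) (v : F -> int) : Prop :=
  [/\ (forall x y : F, x != 0 -> y != 0 -> v (x * y) = v x + v y),
      (forall x y : F, x != 0 -> y != 0 -> x + y != 0 ->
          Num.min (v x) (v y) <= v (x + y))
    & (exists pi : F, pi != 0 /\ v pi = 1)].

Definition vint (F : fieldType) (v : F -> int) (x : F) : bool :=
  (x == 0) || (0 <= v x).

Definition vclose (F : fieldType) (v : F -> int) (N : int) (x y : F) : Prop :=
  x - y = 0 \/ N <= v (x - y).

Definition vcomplete (F : fieldType) (v : F -> int) : Prop :=
  forall u : nat -> F,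
    (forall N : int, exists M : nat, forall i j : nat,
        (M <= i)%N -> (M <= j)%N -> vclose v N (u i) (u j)) ->
    exists l : F, forall N : int, exists M : nat, forall i : nat,
        (M <= i)%N -> vclose v N (u i) l.

Definition finite_residue_field (F : fieldType) (v : F -> int) : Prop :=
  exists s : seq F, all (vint v) s /\
    forall x : F, vint v x -> exists2 y, y \in s & vclose v 1 x y.

Definition ring_of_integers_of_local_field (R : idomainType) : Prop :=
  exists (F : fieldType) (v : F -> int) (iota : {rmorphism R -> F}),
    [/\ injective iota, is_dvaluation v, vcomplete v, finite_residue_field v
      & forall x : F, vint v x <-> exists r : R, iota r = x].

Definition divides (R : comNzRingType) (a b : R) : Prop := exists c : R, b = a * c.

Definition prime_element (R : idomainType) (p : R) : Prop :=
  [/\ p != 0, p \isn't a GRing.unit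
    & forall a b : R, divides p (a * b) -> divides p a \/ divides p b].

(* Quadratic R-lattices, given by a basis: an R-lattice of rank n is    *)
(* R^n (row vectors) with the bilinear form B(x,y) = x G y^T for a      *)
(* symmetric Gram matrix G with entries in R (integrality).            *)

Section Lattices.
Variable R : comUnitRingType.

Definition gram_sym (n : nat) (G : 'M[R]_n) : Prop := G^T = G.

Definition nondegenerate (n : nat) (G : 'M[R]_n) : Prop := \det G != 0.

Definition bform (n : nat) (G : 'M[R]_n) (x y : 'rV[R]_n) : R :=
  (x *m G *m y^T) 0 0.

Definition qform (n : nat) (G : 'M[R]_n) (x : 'rV[R]_n) : R := bform G x x.

Definition orth (n m : nat) (G1 : 'M[R]_n) (G2 : 'M[R]_m) : 'M[R]_(n + m) :=
  block_mx G1 0 0 G2.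

Definition diag_lat (s : seq R) : 'M[R]_(size s) :=
  diag_mx (\row_(i < size s) s`_i).

(* H^n : Gram matrix of n orthogonal copies of the hyperbolic plane,
   on the basis e_1,f_1,...,e_n,f_n with B(e_i,f_i)=1 *)
Definition hyp_n (n : nat) : 'M[R]_(n.*2) :=
  \matrix_(i, j) (if ((i : nat)./2 == (j : nat)./2) && (i != j :> nat)
                  then 1 else 0).

Definition hyp : 'M[R]_(1.*2) := hyp_n 1.

Definition submodule (m : nat) (N : 'rV[R]_m -> Prop) : Prop :=
  [/\ N 0, (forall x y, N x -> N y -> N (x + y))
    & (forall (a : R) x, N x -> N (a *: x))].

Definition direct_summand (m : nat) (M : 'rV[R]_m -> Prop) : Prop :=
  exists N : 'rV[R]_m -> Prop,
    [/\ submodule N,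
        (forall w, exists x y, [/\ M x, N y & w = x + y])
      & (forall w, M w -> N w -> w = 0)].

Definition representation (k m : nat) (K : 'M[R]_k) (L : 'M[R]_m)
    (X : 'M[R]_(k, m)) : Prop :=
  forall x y : 'rV[R]_k, bform L (x *m X) (y *m X) = bform K x y.

Definition image_mx (k m : nat) (X : 'M[R]_(k, m)) : 'rV[R]_m -> Prop :=
  fun w => exists u : 'rV[R]_k, w = u *m X.

Definition prim_rep (m k : nat) (L : 'M[R]_m) (K : 'M[R]_k) : Prop :=
  exists X : 'M[R]_(k, m), representation K L X /\ direct_summand (image_mx X).

Definition prim_rep_elt (m : nat) (L : 'M[R]_m) (beta : R) : Prop :=
  exists v : 'rV[R]_m, qform L v = beta /\
    direct_summand (fun w => exists a : R, w = a *: v).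

Definition prim_universal (n m : nat) (L : 'M[R]_m) : Prop :=
  forall K : 'M[R]_n, gram_sym K -> nondegenerate K -> prim_rep L K.

Definition isometric (n : nat) (G1 G2 : 'M[R]_n) : Prop :=
  exists P : 'M[R]_n, P \in unitmx /\ P *m G1 *m P^T = G2.

End Lattices.

(* Main.v *)
Require Import Defs.
From HB Require Import structures.
From mathcomp Require Import all_boot all_order all_algebra.
From Stdlib Require Import ClassicalEpsilon.
From mathcomp Require Import ring zify.
Import Order.TTheory GRing.Theory Num.Theory.
Local Open Scope ring_scope.
Set Implicit Arguments. Unset Strict Implicit.

Lemma dval_1 (F : fieldType) (v : F -> int) : is_dvaluation v -> v 1 = 0.
Proof.
case=> vM _ _; have := vM 1 1 (oner_neq0 _) (oner_neq0 _); rewrite mulr1 => h.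
by have := congr1 (fun z => z - v 1) h; rewrite subrr addrK.
Qed.

Lemma dval_inv (F : fieldType) (v : F -> int) x : is_dvaluation v -> x != 0 ->
  v x^-1 = - v x.
Proof.
move=> hv x0; have := hv; case=> vM _ _.
have := vM x x^-1 x0 (invr_neq0 x0); rewrite mulfV // dval_1 // => h.
by apply/eqP; rewrite -addr_eq0 addrC -h.
Qed.

Lemma pow_div2 (R : idomainType) (p : R) : prime_element (2%:R : R) ->
  forall K, (0 < K)%N -> divides 2%:R (p ^+ K) -> divides 2%:R p.
Proof.
case=> _ n2u pr; elim=> [//|K IH] _.
rewrite exprS => /pr [//|].
case: K IH => [_|K IH]; last exact: IH.
rewrite expr0 => [[c hc]]; case/negP: n2u; apply/unitrPr; by exists c; rewrite -hc.
Qed.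

Lemma ideal_2 (R : idomainType) (F : fieldType) (v : F -> int) (iota : {rmorphism R -> F}) :
  injective iota -> is_dvaluation v -> (forall x : F, vint v x <-> exists r : R, iota r = x) ->
  prime_element (2%:R : R) ->
  forall d : R, d != 0 -> 1 <= v (iota d) -> divides 2%:R d.
Proof.
move=> inj hv himg h2.
have [vM _ [pi [pi0 vpi]]] := hv.
have h2' := h2; case: h2' => n20 n2u pr.
have iota0 : forall r, (iota r == 0) = (r == 0).
  by move=> r; rewrite -(rmorph0 iota) (inj_eq inj).
set t := iota 2%:R.
have t0 : t != 0 by rewrite iota0.
have intP : forall x : F, x != 0 -> 0 <= v x -> exists r, iota r = x.
  by move=> x x0 hx; apply/himg; rewrite /vint hx orbT.
have vint_ge0 : forall r, r != 0 -> 0 <= v (iota r).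
  move=> r r0; have : vint v (iota r) by apply/himg; exists r.
  by rewrite /vint iota0 (negPf r0).
have vt1 : 1 <= v t.
  rewrite leNgt; apply/negP => ht.
  have [r hr] : exists r, iota r = t^-1.
    apply: intP; first by rewrite invr_eq0.
    by rewrite dval_inv // oppr_ge0 -ltzD1 add0r.
  case/negP: n2u; apply/unitrPr; exists r; apply: inj.
  by rewrite rmorphM rmorph1 hr mulfV.
have vt : v t = 1.
  apply/eqP; rewrite eq_le vt1 andbT.
  have [p hp] : exists p, iota p = pi by apply: intP; rewrite ?vpi.
  have [K hK] : exists K : nat, v t = K%:Z.
    by exists `|v t|%N; rewrite gez0_abs // (le_trans _ vt1).
  have vpiK : forall j : nat, v (pi ^+ j) = j%:Z.
    elim=> [|j IH]; first by rewrite expr0 dval_1.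
    by rewrite exprS vM ?expf_neq0 // IH vpi -addn1 PoszD addrC.
  have [r hr] : exists r, iota r = pi ^+ K / t.
    apply: intP; first by rewrite mulf_neq0 ?invr_eq0 ?expf_neq0.
    by rewrite vM ?invr_eq0 ?expf_neq0 // dval_inv // vpiK hK subrr.
  have hpK : p ^+ K = 2%:R * r.
    by apply: inj; rewrite rmorphM rmorphXn hp hr mulrC divfK.
  have K0 : (0 < K)%N by rewrite -ltz_nat -hK (lt_le_trans _ vt1).
  have [q hq] := pow_div2 h2 K0 (ex_intro _ r hpK).
  have q0 : q != 0.
    by apply: contraNneq pi0 => q0; rewrite -hp hq q0 mulr0 rmorph0.
  rewrite -vpi -hp hq rmorphM vM ?iota0 // -/t.
  by rewrite lerDl vint_ge0.
move=> d d0 hd.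
have [r hr] : exists r, iota r = iota d / t.
  apply: intP; first by rewrite mulf_neq0 ?invr_eq0 ?iota0.
  by rewrite vM ?invr_eq0 ?iota0 // dval_inv // vt subr_ge0.
exists r; apply: inj; by rewrite rmorphM hr -/t mulrC divfK.
Qed.

Lemma fin_res (R : idomainType) : ring_of_integers_of_local_field R ->
  prime_element (2%:R : R) ->
  exists s : seq R, forall r : R, exists2 y, y \in s & divides 2%:R (r - y).
Proof.
move=> [F [v [iota [inj hv _ [s [sint sres]] himg]]]] h2.
have [s' hs'] : exists s' : seq R, map iota s' = s.
  elim: s sint {sres} => [|y s IH] /=; first by exists [::].
  case/andP => /himg [y' hy'] /IH [s' hs']; exists (y' :: s'); by rewrite /= hy' hs'.
exists s' => r.
have [y ys hc] := sres (iota r) (proj2 (himg _) (ex_intro _ r erefl)).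
rewrite -hs' in ys; case/mapP: ys => y' ys' hy; subst y.
exists y' => //.
have [e|e] := eqVneq (r - y') 0; first by exists 0; rewrite e mulr0.
apply: (ideal_2 inj hv himg h2 e).
case: hc; rewrite -rmorphB; last by [].
by move/eqP; rewrite -(rmorph0 iota) (inj_eq inj) (negPf e).
Qed.

Definition pb (P : Prop) : bool := if excluded_middle_informative P then true else false.
Lemma pbP P : reflect P (pb P).
Proof. rewrite /pb; case: excluded_middle_informative => h; by constructor. Qed.

Lemma sq_mod2 (R : idomainType) : ring_of_integers_of_local_field R ->
  prime_element (2%:R : R) -> forall r : R, exists z a, r = z ^+ 2 + 2%:R * a.
Proof.
move=> hR h2; have [s hs] := fin_res hR h2.
case: h2 => _ _ pr.
pose D (x : R) := divides 2%:R x.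
have DD : forall a b, D a -> D b -> D (a + b).
  by move=> a b [c ->] [d ->]; exists (c + d); rewrite mulrDr.
have DN : forall a, D a -> D (- a).
  by move=> a [c ->]; exists (- c); rewrite mulrN.
have Dtr : forall x y z, D (x - y) -> D (y - z) -> D (x - z).
  move=> x y z h1 h3; have -> : x - z = (x - y) + (y - z) by ring.
  exact: DD.
have Dsym : forall x y, D (x - y) -> D (y - x).
  by move=> x y /DN; rewrite opprB.
pose f x := nth 0 s (find (fun y => pb (D (x - y))) s).
have fhas : forall x, has (fun y => pb (D (x - y))) s.
  by move=> x; apply/hasP; have [y ys hy] := hs x; exists y => //; apply/pbP.
have fS : forall x, f x \in s by move=> x; rewrite /f mem_nth // -has_find.
have fD : forall x, D (x - f x) by move=> x; apply/pbP; exact: (nth_find 0 (fhas x)).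
have fE : forall x x', D (x - x') -> f x = f x'.
  move=> x x' hx; rewrite /f; congr nth; apply: eq_find => y.
  apply/pbP/pbP => h; [exact: Dtr (Dsym _ _ hx) h | exact: Dtr hx h].
pose T := undup (map f s).
have Tf : forall x, f x \in T.
  move=> x; rewrite mem_undup; apply/mapP; exists (f x); first exact: fS.
  by apply: fE; apply: fD.
have fT : forall y, y \in T -> f y = y.
  move=> y; rewrite mem_undup => /mapP [x _ ->]; apply: fE; apply: Dsym; exact: fD.
pose phi y := f (y ^+ 2).
have phi_inj : {in T &, injective phi}.
  move=> y1 y2 h1 h3 e; rewrite -(fT _ h1) -(fT _ h3); apply: fE.
  have h12 : D (y1 ^+ 2 - y2 ^+ 2).
    apply: Dtr (fD _) _; rewrite -/(phi y1) e; exact: Dsym (fD _).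
  have : D ((y1 - y2) * (y1 - y2)).
    have -> : (y1 - y2) * (y1 - y2) = (y1 ^+ 2 - y2 ^+ 2) + 2%:R * (- y2 * (y1 - y2)) by ring.
    by apply: DD => //; exists (- y2 * (y1 - y2)).
  by case/pr.
have [_ hT] : (size (map phi T) = size T) * (map phi T =i T).
  apply: uniq_min_size; first by rewrite (map_inj_in_uniq phi_inj) undup_uniq.
    by move=> y /mapP [x _ ->]; exact: Tf.
  by rewrite size_map.
move=> r; have := Tf r; rewrite -hT => /mapP [y _ hy].
have : D (r - y ^+ 2).
  apply: (Dtr r (f r)); first exact: fD.
  rewrite hy; exact: Dsym (fD _).
case=> a ha; exists y, a; rewrite -ha; ring.
Qed.


Lemma rep_mx (R : comUnitRingType) k m (K : 'M[R]_k) (L : 'M_m) (X : 'M_(k, m)) :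
  X *m L *m X^T = K -> representation K L X.
Proof. by move=> hK x y; rewrite /bform -hK trmx_mul !mulmxA. Qed.

Lemma mx_rep (R : comUnitRingType) k m (K : 'M[R]_k) (L : 'M_m) (X : 'M_(k, m)) :
  representation K L X -> X *m L *m X^T = K.
Proof.
move=> h; apply/matrixP => i j.
have e : forall (A : 'M[R]_k), (delta_mx (ord0 : 'I_1) i *m A *m (delta_mx (ord0 : 'I_1) j)^T) 0 0 = A i j.
  move=> A; rewrite trmx_delta -rowE -colE !mxE.
  done.
rewrite -(e (X *m L *m X^T)); transitivity (bform K (delta_mx (ord0 : 'I_1) i) (delta_mx (ord0 : 'I_1) j)); last exact: e.
by rewrite -h /bform trmx_mul !mulmxA.
Qed.

Lemma ds_transfer (R : comUnitRingType) m1 m2 k (X : 'M[R]_(k, m2)) (Q : 'M_(m2, m1)) (Q' : 'M_(m1, m2)) :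
  Q *m Q' = 1%:M -> Q' *m Q = 1%:M ->
  direct_summand (image_mx X) -> direct_summand (image_mx (X *m Q)).
Proof.
move=> hQQ hQQ' [N [[N0 ND NZ] Nspan Nint]].
exists (fun w => exists y, N y /\ w = y *m Q); split.
- split; first by exists 0; rewrite mul0mx.
  + by move=> x y [a [ha ->]] [b [hb ->]]; exists (a + b); rewrite mulmxDl; split => //; apply: ND.
  + by move=> a x [b [hb ->]]; exists (a *: b); rewrite scalemxAl; split => //; apply: NZ.
- move=> w; have [x [y [[u hx] hy e]]] := Nspan (w *m Q').
  exists (x *m Q), (y *m Q); split.
  + by exists u; rewrite hx mulmxA.
  + by exists y.
  + by rewrite -mulmxDl -e -mulmxA hQQ' mulmx1.
- move=> w [u hu] [y [hy e]].
  have h1 : u *m X = y.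
    by have := congr1 (mulmx^~ Q') e; rewrite /= {1}hu -!mulmxA hQQ !mulmx1.
  have h0 : u *m X = 0 by apply: Nint => //; [exists u | rewrite h1].
  by rewrite hu mulmxA h0 mul0mx.
Qed.

Lemma prim_rep_transfer (R : comUnitRingType) m1 m2 k (L1 : 'M[R]_m1) (L2 : 'M_m2)
    (K : 'M_k) (Q : 'M_(m2, m1)) (Q' : 'M_(m1, m2)) :
  Q *m L1 *m Q^T = L2 -> Q *m Q' = 1%:M -> Q' *m Q = 1%:M ->
  prim_rep L2 K -> prim_rep L1 K.
Proof.
move=> hL hQQ hQQ' [X [hX hds]]; exists (X *m Q); split; last exact: ds_transfer hQQ hQQ' hds.
by apply: rep_mx; rewrite -(mx_rep hX) -hL trmx_mul !mulmxA.
Qed.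

Definition Hs (R : comUnitRingType) n : 'M[R]_(n + n) := block_mx 0 1%:M 1%:M 0.

Lemma core (R : comUnitRingType) n m k (J : 'M[R]_m) (K : 'M_k) (Y : 'M_(k, m))
   (w : 'rV_m) (u : R) (l : 'M_n) (c : 'rV_n) (T : 'M_n) :
  J^T = J -> Y *m J *m Y^T = K -> direct_summand (image_mx Y) ->
  w *m J *m w^T = u%:M -> T + T^T + u *: (c^T *m c) = l ->
  prim_rep (orth (Hs R n) J) (orth l K).
Proof.
move=> hJ hK hY hw hT.
pose D := - (Y *m J *m w^T *m c).
pose X := block_mx (row_mx 1%:M T) (c^T *m w) (row_mx 0 D) Y.
exists X; split.
- apply: rep_mx; rewrite /X /orth /Hs.
  rewrite mulmx_block !mul_row_block !mulmx0 !mul0mx !mulmx1 ?mul1mx !addr0 ?add0r.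
  rewrite tr_block_mx !tr_row_mx !trmx_mul !trmxK trmx1 trmx0.
  rewrite mulmx_block !mul_row_col !mulmx0 !mul0mx !mulmx1 !mul1mx !addr0 !add0r.
  rewrite hK; congr block_mx.
  + rewrite -hT; congr (_ + _); rewrite !mulmxA -!(mulmxA c^T) hw.
    by rewrite mul_scalar_mx scalemxAr.
  + by rewrite /D raddfN /= !trmx_mul !trmxK hJ !mulmxA addNr.
  + by rewrite /D !mulmxA addNr.
have hX : forall (p : 'rV[R]_n) (q : 'rV[R]_k), row_mx p q *m X =
    row_mx (row_mx p (p *m T + q *m D)) (p *m (c^T *m w) + q *m Y).
  by move=> p q; rewrite /X mul_row_block !mul_mx_row add_row_mx mulmx1 mulmx0 addr0.
have [N [[N0 ND NZ] Nspan Nint]] := hY.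
exists (fun z => exists b j, N j /\ z = row_mx (row_mx 0 b) j); split.
- split.
  + by exists 0, 0; split => //; rewrite !row_mx0.
  + move=> x y [b [j [hj ->]]] [b' [j' [hj' ->]]]; exists (b + b'), (j + j').
    by split; [exact: ND | rewrite !add_row_mx addr0].
  + move=> a x [b [j [hj ->]]]; exists (a *: b), (a *: j).
    by split; [exact: NZ | rewrite !scale_row_mx scaler0].
- move=> z.
  set a := lsubmx (lsubmx z); set b := rsubmx (lsubmx z); set j := rsubmx z.
  have [x [y [[q hq] hy e]]] := Nspan (j - a *m (c^T *m w)).
  exists (row_mx a q *m X), (row_mx (row_mx 0 (b - (a *m T + q *m D))) y); split.
  + by exists (row_mx a q).
  + by exists (b - (a *m T + q *m D)), y.
  + rewrite hX !add_row_mx addr0 -hq addrC subrK -addrA -e addrC subrK.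
    by rewrite /a /b /j !hsubmxK.
- move=> z [v hv] [b [j [hj hz]]].
  rewrite -[v]hsubmxK hX in hv.
  move: hv; set p := lsubmx v; set q := rsubmx v => hv.
  have := hz; rewrite hv => /eq_row_mx [/eq_row_mx [p0 _] ej].
  rewrite p0 mul0mx add0r in ej.
  have qY0 : q *m Y = 0 by apply: Nint; [exists q | rewrite ej].
  have qD0 : q *m D = 0 by rewrite /D mulmxN !mulmxA qY0 !mul0mx oppr0.
  by rewrite p0 qY0 qD0 !mul0mx !addr0 !row_mx0.
Qed.

Definition gv n (i : nat) : nat := (if i < n then i * 2 else (i - n) * 2 + 1)%N.
Lemma gv_lt n (i : 'I_(n + n)) : (gv n i < n.*2)%N.
Proof. rewrite -muln2 /gv; have := ltn_ord i; case: ifP => h; lia. Qed.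
Definition gord n (i : 'I_(n+n)) : 'I_(n.*2) := Ordinal (gv_lt i).
Definition Pm (R : comUnitRingType) n : 'M[R]_(n + n, n.*2) := rowsub (@gord n) 1%:M.

Lemma tr_Pm (R : comUnitRingType) n : (Pm R n)^T = colsub (@gord n) 1%:M.
Proof. by apply/matrixP => i j; rewrite !mxE eq_sym. Qed.

Lemma PHP (R : comUnitRingType) n : Pm R n *m hyp_n R n *m (Pm R n)^T = Hs R n.
Proof.
rewrite tr_Pm mulmx_colsub mulmx1 /Pm -rowsubE /Hs.
have F : forall x, (n + x < n)%N = false.
  by move=> x; rewrite -[X in (_ < X)%N]addn0 ltn_add2l.
apply/matrixP => i j.
case: (split_ordP i) => [i' ->|i' ->]; case: (split_ordP j) => [j' ->|j' ->];
  rewrite ?block_mxEul ?block_mxEur ?block_mxEdl ?block_mxEdr !mxE /= /gv -!divn2 ?F ?ltn_ord;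
  have Hi := ltn_ord i'; have Hj := ltn_ord j'.
all: case: ifP => [/andP [/eqP h1 /eqP h2]|/negbT h].
all: try done.
all: try (exfalso; lia).
all: case: (eqVneq i' j') => [e|e]; [subst j'; rewrite ?eqxx | rewrite ?(negPf e)]; try done.
all: exfalso.
all: try (move/eqP: e => e; have e' : (i' : nat) <> j' by move=> x; apply: e; apply: val_inj).
all: try (move: h; rewrite negb_and negbK => /orP [/eqP|/eqP]).
all: lia.
Qed.

Lemma gord_inj n : injective (@gord n).
Proof.
move=> i j /(congr1 val); rewrite /= /gv; have := ltn_ord i; have := ltn_ord j.
by case: (ltnP i n) => h1; case: (ltnP j n) => h2 => *; apply: val_inj => /=; lia.
Qed.

Lemma gord_surj n (a : 'I_(n.*2)) : exists i, @gord n i = a.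
Proof.
have ha : (a < n * 2)%N by rewrite muln2.
have hi : ((if a %% 2 == 0 then a %/ 2 else n + a %/ 2) < n + n)%N.
  by case: ifP => /eqP h; lia.
exists (Ordinal hi); apply: val_inj; rewrite /= /gv.
by have [h|/eqP h] := eqVneq (a %% 2)%N 0%N; case: ltnP => h2; lia.
Qed.

Lemma PPt (R : comUnitRingType) n : Pm R n *m (Pm R n)^T = 1%:M.
Proof.
rewrite tr_Pm mulmx_colsub mulmx1 /Pm; apply/matrixP => i j; rewrite !mxE.
by rewrite (inj_eq (@gord_inj n)) eq_sym.
Qed.

Lemma PtP (R : comUnitRingType) n : (Pm R n)^T *m Pm R n = 1%:M.
Proof.
apply/matrixP => a b; rewrite !mxE.
have [i0 hi0] := gord_surj a.
rewrite (bigD1 i0) //= big1 ?addr0.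
  by rewrite !mxE hi0 eqxx mul1r.
move=> i hi; rewrite !mxE; have -> : (gord i == a) = false.
  by apply/negbTE; rewrite -hi0 (inj_eq (@gord_inj n)).
by rewrite mul0r.
Qed.

Lemma hyp_transfer (R : comUnitRingType) n m k (J : 'M[R]_m) (K : 'M_k) :
  prim_rep (orth (Hs R n) J) K -> prim_rep (orth (hyp_n R n) J) K.
Proof.
apply: (prim_rep_transfer (Q := block_mx (Pm R n) 0 0 1%:M) (Q' := block_mx (Pm R n)^T 0 0 1%:M)).
- rewrite /orth tr_block_mx !trmx0 trmx1 !mulmx_block.
  by rewrite !mulmx0 !mul0mx ?mulmx1 ?mul1mx !addr0 ?add0r mul0mx PHP.
- by rewrite (mulmx_block (R := R)) !mulmx0 !mul0mx !mulmx1 !addr0 !add0r PPt -scalar_mx_block.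
- by rewrite (mulmx_block (R := R)) !mulmx0 !mul0mx !mulmx1 !addr0 !add0r PtP -scalar_mx_block.
Qed.


Lemma partb_rep (R : idomainType) (hR : ring_of_integers_of_local_field R)
  (h2 : prime_element (2%:R : R)) n m k (J : 'M[R]_m) (K : 'M_k) (Y : 'M_(k, m))
  (w : 'rV_m) (u : R) (l : 'M_n) :
  J^T = J -> Y *m J *m Y^T = K -> direct_summand (image_mx Y) ->
  w *m J *m w^T = u%:M -> u \is a GRing.unit -> l^T = l ->
  prim_rep (orth (hyp_n R n) J) (orth l K).
Proof.
move=> hJ hK hY hw hu hl.
have [f hf] : exists f : 'I_n -> R * R, forall i, l i i * u^-1 = (f i).1 ^+ 2 + 2%:R * (f i).2.
  apply: (@fin_all_exists _ (fun _ => (R * R)%type) (fun i (p : R * R) => l i i * u^-1 = p.1 ^+ 2 + 2%:R * p.2)) => i; have [z [a e]] := sq_mod2 hR h2 (l i i * u^-1).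
  by exists (z, a).
pose c : 'rV_n := \row_i (f i).1.
pose S := l - u *: (c^T *m c).
pose T : 'M_n := \matrix_(i, j) (if (i < j)%N then S i j else if i == j then u * (f i).2 else 0).
apply: hyp_transfer; apply: (core (c := c) (T := T) hJ hK hY hw).
apply/matrixP => i j; rewrite !mxE big_ord1 !mxE.
have lsym : l j i = l i j by have := congr1 (fun M : 'M[R]_n => M i j) hl; rewrite mxE.
case: ltngtP => h.
  have -> : (j == i) = false by apply/negbTE/eqP => e; rewrite e ltnn in h.
  ring.
- have -> : (i == j) = false by apply/negbTE/eqP => e; rewrite e ltnn in h.
  rewrite big_ord1 !mxE lsym; ring.
- have e : i = j := val_inj h; subst j; rewrite eqxx.
  rewrite -[l i i](divrK hu) (hf i); ring.
Qed.

Lemma ds_ext (R : comUnitRingType) m (M1 M2 : 'rV[R]_m -> Prop) :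
  (forall w, M1 w <-> M2 w) -> direct_summand M1 -> direct_summand M2.
Proof.
move=> e [N [hN hs hi]]; exists N; split => //.
- by move=> w; have [x [y [hx hy ->]]] := hs w; exists x, y; split => //; apply/e.
- by move=> w /e; apply: hi.
Qed.

Lemma prim_rep_drop0 (R : comUnitRingType) M n (L : 'M[R]_M) (K : 'M_n) :
  prim_rep L (orth K (0 : 'M_0)) -> prim_rep L K.
Proof.
move=> [X [hX hds]]; exists (usubmx X); split.
- apply: rep_mx; have := mx_rep hX; rewrite -[X]vsubmxK tr_col_mx mul_col_mx mul_col_row.
  by rewrite /orth col_mxKu => /(congr1 ulsubmx); rewrite !block_mxKul.
- apply: ds_ext hds => w; split.
  + move=> [u ->]; exists (lsubmx u).
    by rewrite -{1}[u]hsubmxK -{1}[X]vsubmxK mul_row_col [dsubmx X]flatmx0 mulmx0 addr0.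
  + move=> [v ->]; exists (row_mx v 0).
    by rewrite -{2}[X]vsubmxK mul_row_col mul0mx addr0.
Qed.

Lemma partb_univ (R : idomainType) (hR : ring_of_integers_of_local_field R)
  (h2 : prime_element (2%:R : R)) n m (J : 'M[R]_m) (w : 'rV_m) (u : R) :
  J^T = J -> w *m J *m w^T = u%:M -> u \is a GRing.unit ->
  prim_universal n (orth (hyp_n R n) J).
Proof.
move=> hJ hw hu K hK _; apply: prim_rep_drop0.
apply: (partb_rep hR h2 (Y := 0 : 'M_(0, m)) hJ _ _ hw hu hK); first exact: flatmx0.
exists (fun _ => True); split.
- by [].
- by move=> z; exists 0, z; split => //; [exists 0; rewrite mulmx0 | rewrite add0r].
- by move=> z [v ->]; rewrite mulmx0.
Qed.


Definition mx3 (R : comUnitRingType) (a b c d e f g h k : R) : 'M[R]_3 :=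
  \matrix_(i < 3, j < 3) nth 0 (nth [::] [:: [:: a; b; c]; [:: d; e; f]; [:: g; h; k]] i) j.

Lemma mx3_mul (R : comUnitRingType) (a b c d e f g h k a' b' c' d' e' f' g' h' k' : R) :
  mx3 a b c d e f g h k *m mx3 a' b' c' d' e' f' g' h' k' =
  mx3 (a * a' + b * d' + c * g') (a * b' + b * e' + c * h') (a * c' + b * f' + c * k')
      (d * a' + e * d' + f * g') (d * b' + e * e' + f * h') (d * c' + e * f' + f * k')
      (g * a' + h * d' + k * g') (g * b' + h * e' + k * h') (g * c' + h * f' + k * k').
Proof.
apply/matrixP => i j; rewrite !mxE !big_ord_recr big_ord0 /= !mxE /=.
by case: i => [[|[|[|i]]] Hi] //; case: j => [[|[|[|j]]] Hj] //=; rewrite add0r.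
Qed.

Lemma mx3_tr (R : comUnitRingType) (a b c d e f g h k : R) :
  (mx3 a b c d e f g h k)^T = mx3 a d g b e h c f k.
Proof.
apply/matrixP => i j; rewrite !mxE.
by case: i => [[|[|[|i]]] Hi] //; case: j => [[|[|[|j]]] Hj].
Qed.

Lemma mx3_1 (R : comUnitRingType) : (1%:M : 'M[R]_3) = mx3 1 0 0 0 1 0 0 0 1.
Proof.
apply/matrixP => i j; rewrite !mxE.
by case: i => [[|[|[|i]]] Hi] //; case: j => [[|[|[|j]]] Hj].
Qed.

Lemma G1_mx3 (R : comUnitRingType) (eps : R) :
  orth (hyp R) (diag_lat [:: eps]) = mx3 0 1 0 1 0 0 0 0 eps.
Proof.
apply/matrixP => i j; rewrite /orth.
case: (split_ordP i) => i' ->; case: (split_ordP j) => j' ->;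
  rewrite ?block_mxEul ?block_mxEur ?block_mxEdl ?block_mxEdr !mxE /=.
all: case: i' => [[|[|[|i']]] Hi] //; case: j' => [[|[|[|j']]] Hj] //=.
all: try by rewrite ?mulr1n.
Qed.

Lemma G2_mx3 (R : comUnitRingType) (eps : R) :
  diag_lat [:: 1; -1; eps] = mx3 1 0 0 0 (-1) 0 0 0 eps.
Proof.
apply/matrixP => i j; rewrite !mxE.
case: i => [[|[|[|i]]] Hi] //; case: j => [[|[|[|j]]] Hj] //=.
Qed.

Lemma iso_a (R : idomainType) (hR : ring_of_integers_of_local_field R)
  (h2 : prime_element (2%:R : R)) (eps : R) : eps \is a GRing.unit ->
  isometric (orth (hyp R) (diag_lat [:: eps])) (diag_lat [:: 1; -1; eps]).
Proof.
move=> he; have [z [a ea]] := sq_mod2 hR h2 eps^-1.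
pose c := eps * a.
have rel : 2%:R * c = 1 - z ^+ 2 * eps.
  have : eps * eps^-1 = eps * (z ^+ 2 + 2%:R * a) by rewrite ea.
  rewrite mulrV // /c => e1; rewrite [X in X - _]e1; ring.
pose Q := mx3 1 1 0 c (c - 1) z (- (z * eps)) (- (z * eps)) 1.
pose P := mx3 (- (c - 1 + z ^+ 2 * eps)) 1 (- z) (c + z ^+ 2 * eps) (-1) z (z * eps) 0 1.
have PQ : P *m Q = 1%:M.
  rewrite /P /Q mx3_mul mx3_1; congr mx3; ring.
have QG : Q *m diag_lat [:: 1; -1; eps] *m Q^T = orth (hyp R) (diag_lat [:: eps]).
  rewrite G1_mx3 G2_mx3 /Q mx3_tr !mx3_mul; congr mx3; try ring.
  transitivity (2%:R * c - (1 - z ^+ 2 * eps)); first ring.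
  by rewrite rel subrr.
exists P; split; first by case: (mulmx1_unit PQ).
rewrite -QG !mulmxA PQ mul1mx -mulmxA -trmx_mul PQ trmx1 mulmx1.
done.
Qed.


Unset Implicit Arguments. Set Strict Implicit.

Lemma row2 (R : comUnitRingType) (a b : R) :
  row_mx (\row_(i < 1) [:: a]`_i) (\row_(i < 1) [:: b]`_i) = (\row_(i < 2) [:: a; b]`_i :> 'rV_(1 + 1)).
Proof.
apply/matrixP => i j; rewrite !ord1.
by case: (split_ordP j) => j' ->; rewrite ?row_mxEl ?row_mxEr !mxE !ord1.
Qed.

Theorem lemma5p2 (R : idomainType)
    (hR : ring_of_integers_of_local_field R)
    (hchar : 2%N \notin [pchar R])
    (h2 : prime_element (2%:R : R)) :
  (forall eps : R, eps \is a GRing.unit ->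
     [/\ isometric (orth (hyp R) (diag_lat [:: eps]))
                   (diag_lat [:: 1; -1; eps]),
         (forall alpha : R,
            prim_rep (orth (hyp R) (diag_lat [:: eps])) (diag_lat [:: alpha; eps]))
       & prim_universal 1 (orth (hyp R) (diag_lat [:: eps]))])
  /\
  (forall (m k : nat) (J : 'M[R]_m) (K : 'M[R]_k),
     gram_sym J -> gram_sym K ->
     prim_rep J K ->
     (exists u : R, u \is a GRing.unit /\ prim_rep_elt J u) ->
     forall n : nat, (1 <= n)%N ->
       (forall l : 'M[R]_n, gram_sym l ->
          prim_rep (orth (hyp_n R n) J) (orth l K))
       /\ prim_universal n (orth (hyp_n R n) J)).
Proof.
have qf : forall m (J : 'M[R]_m) v u, qform J v = u -> v *m J *m v^T = u%:M.
  by move=> m J v u <-; apply/matrixP => i j; rewrite !ord1 [in RHS]mxE eqxx mulr1n.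
have d1 : forall eps : R, (1%:M : 'rV_1) *m diag_lat [:: eps] *m (1%:M : 'rV_1)^T = eps%:M.
  by move=> eps; rewrite mul1mx trmx1 mulmx1; apply/matrixP => i j; rewrite !ord1 !mxE.
split.
- move=> eps he; split.
  + exact: iso_a.
  + move=> alpha.
    have -> : diag_lat [:: alpha; eps] = orth (diag_lat [:: alpha]) (diag_lat [:: eps]).
      by rewrite /orth /diag_lat -diag_mx_row -row2.
    rewrite /hyp; apply: (@partb_rep R hR h2 1 1 1 _ _ 1%:M 1%:M eps).
    * by rewrite /diag_lat tr_diag_mx.
    * by rewrite mul1mx trmx1 mulmx1.
    * exists (fun w => w = 0); split.
      -- split => //; [by move=> x y -> ->; rewrite addr0 | by move=> a x ->; rewrite scaler0].
      -- by move=> w; exists w, 0; split => //; [exists w; rewrite mulmx1 | rewrite addr0].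
      -- by [].
    * exact: d1.
    * done.
    * by rewrite /diag_lat tr_diag_mx.
  + apply: (partb_univ hR h2 (w := 1%:M) (u := eps)) => //; last exact: d1.
    by rewrite /diag_lat tr_diag_mx.
- move=> m k J K hJ hK [Y [hY hds]] [u [hu [v [hv _]]]] n hn; split.
  + move=> l hl; apply: (partb_rep hR h2); [exact: hJ | exact: (mx_rep hY) | exact: hds | exact: (qf _ _ _ _ hv) | exact: hu | exact: hl].
  + apply: (partb_univ hR h2 (w := v) (u := u)); [exact: hJ | exact: (qf _ _ _ _ hv) | exact: hu].
Qed.
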